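(* Let $k,m\ge 1$, let $q\in\mathbb{R}^k$ (the source position) and let $p_1,\dots,p_m\in\mathbb{R}^k$ (the sensor positions) with $p_i\neq q$ for all $i$; write $\mathbf{p}=[p_1^\top,\dots,p_m^\top]^\top$, $r_i=\|p_i-q\|$ and $\hat r_i=(p_i-q)/\|p_i-q\|$. For each $i$ let $g_i:(0,\infty)\to\mathbb{R}$ be continuously differentiable and let $h_i(p_i,q)=g_i(\|p_i-q\|)$. Assume: (i) for each $i$, $|g_i'(r)|$ is monotonically decreasing in $r$; (ii) $\sum_{i=1}^m \hat r_i\hat r_i^\top\succ 0$. Let $H(\mathbf{p},q)=(h_1(p_1,q),\dots,h_m(p_m,q))^\top$, let $\nabla_q H(\mathbf{p},q)$ be the $k\times m$ matrix whose $i$-th column is $\nabla_q h_i(p_i,q)$, and suppose the $k\times k$ matrix $\nabla_q H(\mathbf{p},q)\nabla_q H(\mathbf{p},q)^\top$ is invertible, so that $$L(\mathbf{p},q)=\operatorname{Tr}\Big[\big(\nabla_q H(\mathbf{p},q)\,\nabla_q H(\mathbf{p},q)^\top\big)^{-1}\Big]$$ is defined. Then $$\frac{1}{m\,L(\mathbf{p},q)}\le \max_{1\le i\le m}|g_i'(r_i)|^2 .$$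
   Context: Here $\|\cdot\|$ is the Euclidean norm, $\succ 0$ means positive definite, and $\nabla_q h_i$ denotes the gradient of $h_i$ with respect to $q$. The matrix $\nabla_q H\nabla_q H^\top$ plays the role of the (unnormalized) Fisher information matrix of the measurements $y_i=h_i(p_i,q)+\nu_i$ with i.i.d. Gaussian noise. *)

(* Defs.v *)
From HB Require Import structures.
From mathcomp Require Import all_boot all_order all_algebra.
From mathcomp Require Import all_classical all_reals all_analysis.
Set Implicit Arguments. Unset Strict Implicit. Unset Printing Implicit Defensive.
Import Order.TTheory GRing.Theory Num.Theory.
Import numFieldNormedType.Exports.
Local Open Scope ring_scope.

(* Euclidean norm of a row vector (the library norm on matrices is the sup norm). *)
Definition enorm (R : realType) (k : nat) (v : 'rV[R]_k) : R :=
  Num.sqrt (\sum_(j < k) v 0 j ^+ 2).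

Definition unitdir (R : realType) (k : nat) (pi q : 'rV[R]_k) : 'rV[R]_k :=
  (enorm (pi - q))^-1 *: (pi - q).

Definition posdef (R : realType) (k : nat) (M : 'M[R]_k) : Prop :=
  M^T = M /\ forall v : 'rV[R]_k, v != 0 -> 0 < (v *m M *m v^T) 0 0.

Definition grad (R : realType) (k : nat) (f : 'rV[R]_k -> R) (q : 'rV[R]_k)
  : 'rV[R]_k := \row_(j < k) ('D_(delta_mx 0 j) f q).

Definition hfun (R : realType) (k : nat) (g : R -> R) (pi q : 'rV[R]_k) : R :=
  g (enorm (pi - q)).

Definition gradH (R : realType) (k m : nat) (g : 'I_m -> R -> R)
  (p : 'I_m -> 'rV[R]_k) (q : 'rV[R]_k) : 'M[R]_(k, m) :=
  \matrix_(j < k, i < m) (grad (fun x => hfun (g i) (p i) x) q) 0 j.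

Definition Lcrb (R : realType) (k m : nat) (g : 'I_m -> R -> R)
  (p : 'I_m -> 'rV[R]_k) (q : 'rV[R]_k) : R :=
  \tr (invmx (gradH g p q *m (gradH g p q)^T)).

(* Main.v *)
Require Import Defs.
From HB Require Import structures.
From mathcomp Require Import all_boot all_order all_algebra.
From mathcomp Require Import all_classical all_reals all_analysis.
From mathcomp Require Import ring lra.
Import Order.TTheory GRing.Theory Num.Theory.
Import numFieldNormedType.Exports.
Local Open Scope ring_scope.

Section Helpers.
Set Implicit Arguments. Unset Strict Implicit.
Context {R : realType}.

Lemma enorm_pos (k : nat) (p q : 'rV[R]_k) : p != q -> 0 < enorm (p - q).
Proof.
move=> hpq; rewrite /enorm sqrtr_gt0.
set d := p - q.
rewrite lt_def sumr_ge0 ?andbT; last by move=> l _; exact: sqr_ge0.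
apply/negP => /eqP /psumr_eq0P H.
move: hpq; rewrite -subr_eq0 -/d => /negP; apply; apply/eqP/matrixP => a l.
rewrite ord1 [X in _ = X]mxE; apply/eqP; rewrite -sqrf_eq0; apply/eqP.
exact: (H (fun i _ => sqr_ge0 _) l isT).
Qed.


Lemma derive_line (k : nat) (F : 'rV[R]_k -> R) (q v : 'rV[R]_k) :
  derive F q v = derive1 (fun t : R => F (t *: v + q)) 0.
Proof.
rewrite derive1E /derive /comp /shift /= scale0r add0r.
do 2 f_equal; apply/funext => h; by rewrite addr0 [h%:A]mulr1.
Qed.

Lemma derivable_comp1 (f g : R -> R) x :
  derivable f x 1 -> derivable g (f x) 1 -> derivable (g \o f) x 1.
Proof.
move=> /derivable1_diffP df /derivable1_diffP dg; apply/derivable1_diffP.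
exact: differentiable_comp.
Qed.

Lemma sumsq_line (k : nat) (d : 'rV[R]_k) (j : 'I_k) (t : R) :
  \sum_(l < k) (d 0 l - t * (delta_mx 0 j : 'rV[R]_k) 0 l) ^+ 2
  = \sum_(l < k) d 0 l ^+ 2 - 2 * d 0 j * t + t ^+ 2.
Proof.
rewrite (bigD1 j) //= [in RHS](bigD1 j) //= mxE !eqxx /= mulr1.
rewrite (eq_bigr (fun l => d 0 l ^+ 2)); last first.
  by move=> l /negbTE hl; rewrite mxE hl andbF mulr0 subr0.
ring.
Qed.


Lemma grad_entry (k : nat) (g : R -> R) (p q : 'rV[R]_k) (j : 'I_k) :
  p != q -> derivable g (enorm (p - q)) 1 ->
  derive (fun x => hfun g p x) q (delta_mx 0 j)
  = derive1 g (enorm (p - q)) * (- (p - q) 0 j / enorm (p - q)).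
Proof.
move=> hpq dg.
set d := p - q.
set c := \sum_(l < k) d 0 l ^+ 2.
have c0 : 0 < c.
  rewrite lt_def sumr_ge0 ?andbT; last by move=> l _; exact: sqr_ge0.
  apply/negP => /eqP /psumr_eq0P H.
  move: hpq; rewrite -subr_eq0 -/d => /negP; apply; apply/eqP/matrixP => a l.
  rewrite ord1 [X in _ = X]mxE; apply/eqP; rewrite -sqrf_eq0; apply/eqP.
  exact: (H (fun i _ => sqr_ge0 _) l isT).
set P : {poly R} := c%:P - (2 * d 0 j) *: 'X + 'X^2.
have hP t : P.[t] = c - 2 * d 0 j * t + t ^+ 2.
  by rewrite /P !hornerE; ring.
have Hfun : (fun t => hfun g p (t *: delta_mx 0 j + q)) = g \o (Num.sqrt \o horner P).
  apply/funext => t; rewrite /hfun /enorm /= hP -sumsq_line.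
  congr (g (Num.sqrt _)); apply: eq_bigr => l _; rewrite !mxE; ring.
have hsq : derivable Num.sqrt (P.[0]) 1.
  by apply: ex_derive; apply: is_derive1_sqrt; rewrite hP; lra.
have hPd : derivable (horner P) 0 1 by exact: derivable_horner.
rewrite derive_line Hfun derive1_comp; last 2 first.
- exact: derivable_comp1.
- by rewrite /= hP expr0n /= mulr0 subr0 addr0.
rewrite (@derive1_comp _ (horner P) Num.sqrt 0) //.
rewrite !derive1E /= derive_sqrt; last by rewrite hP; lra.
have -> : 'D_1 (horner P) 0 = P^`().[0] by apply: derive_val.
rewrite hP /P !poly.derivE !hornerE /= expr0n /= subr0 !addr0.
have -> : enorm d = Num.sqrt c by [].
have s0 : Num.sqrt c != 0 by rewrite gt_eqF // sqrtr_gt0.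
by field.
Qed.



Lemma diag_entry (k : nat) (A : 'M[R]_k) (j : 'I_k) :
  ((delta_mx 0 j : 'rV[R]_k) *m A *m (delta_mx 0 j : 'rV[R]_k)^T) 0 0 = A j j.
Proof. by rewrite -rowE trmx_delta -colE !mxE. Qed.

Lemma dotE (m : nat) (X Y : 'rV[R]_m) :
  (X *m Y^T) 0 0 = \sum_i X 0 i * Y 0 i.
Proof. by rewrite mxE; apply: eq_bigr => i _; rewrite mxE. Qed.

Lemma quad_sum (m : nat) (a b : 'I_m -> R) (t : R) :
  \sum_i (a i - t * b i) ^+ 2
  = \sum_i a i ^+ 2 - 2 * t * \sum_i a i * b i + t ^+ 2 * \sum_i b i ^+ 2.
Proof.
rewrite (eq_bigr (fun i => (a i ^+ 2 - (2 * t) * (a i * b i)) + t ^+ 2 * b i ^+ 2));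
  last by move=> i _; ring.
by rewrite big_split /= sumrB -!mulr_sumr.
Qed.

Lemma key_ineq (k m : nat) (G : 'M[R]_(k, m)) (j : 'I_k) :
  G *m G^T \in unitmx ->
  let N := invmx (G *m G^T) in let M := G *m G^T in
  [/\ 0 <= N j j, 0 <= M j j & 1 <= N j j * M j j].
Proof.
move=> hu N M.
set e : 'rV[R]_k := delta_mx 0 j.
set U := e *m N *m G. set W := e *m G.
have NT : N^T = N by rewrite /N trmx_inv trmx_mul trmxK.
have NM : N *m M = 1%:M by rewrite /N mulVmx.
have MN : M *m N = 1%:M by rewrite /N mulmxV.
have ee : (e *m e^T) 0 0 = 1 by rewrite /e trmx_delta mul_delta_mx mxE !eqxx.
have UW : \sum_i U 0 i * W 0 i = 1.
  rewrite -dotE /U /W trmx_mul !mulmxA -(mulmxA (e *m N) G G^T) -/M.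
  by rewrite -(mulmxA e N M) NM mulmx1.
have UU : \sum_i U 0 i ^+ 2 = N j j.
  rewrite (eq_bigr (fun i => U 0 i * U 0 i)); last by move=> i _; rewrite expr2.
  rewrite -dotE /U !trmx_mul NT !mulmxA -(mulmxA (e *m N) G G^T) -/M.
  by rewrite -(mulmxA e N M) NM mulmx1 diag_entry.
have WW : \sum_i W 0 i ^+ 2 = M j j.
  rewrite (eq_bigr (fun i => W 0 i * W 0 i)); last by move=> i _; rewrite expr2.
  by rewrite -dotE /W !trmx_mul !mulmxA -(mulmxA e G G^T) -/M diag_entry.
have Q t : 0 <= N j j - 2 * t + t ^+ 2 * M j j.
  have := @quad_sum m (fun i => U 0 i) (fun i => W 0 i) t.
  rewrite UW UU WW mulr1 => <-.
  by apply: sumr_ge0 => i _; exact: sqr_ge0.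
have n0 : 0 <= N j j by have := Q 0; lra.
have m0 : 0 <= M j j by rewrite -WW; apply: sumr_ge0 => i _; exact: sqr_ge0.
split => //.
have [mz|mp] := eqVneq (M j j) 0.
  by have := Q ((N j j + 1) / 2); rewrite mz; lra.
have mpos : 0 < M j j by rewrite lt_def mp.
have := Q (M j j)^-1.
rewrite expr2 -mulrA mulVf // mulr1 => h.
have h2 : 0 <= N j j - (M j j)^-1 by lra.
have := mulr_ge0 h2 (ltW mpos); rewrite mulrBl mulVf //; lra.
Qed.

End Helpers.

Theorem proposition1 (R : realType) (k m : nat) (hk : (0 < k)%N) (hm : (0 < m)%N)
  (q : 'rV[R]_k) (p : 'I_m -> 'rV[R]_k) (g : 'I_m -> R -> R)
  (hpq : forall i, p i != q)
  (hgd : forall i r, 0 < r -> derivable (g i) r 1)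
  (hgc : forall i r, 0 < r -> {for r, continuous (derive1 (g i))})
  (hmono : forall i r s, 0 < r -> r <= s -> `|derive1 (g i) s| <= `|derive1 (g i) r|)
  (hpd : posdef (\sum_(i < m) (unitdir (p i) q)^T *m unitdir (p i) q))
  (hinv : gradH g p q *m (gradH g p q)^T \in unitmx) :
  1 / (m%:R * Lcrb g p q)
    <= \big[Num.max/0]_(i < m) (derive1 (g i) (enorm (p i - q))) ^+ 2.
Proof.
set G := gradH g p q.
rewrite /Lcrb -/G.
set M := G *m G^T.
set N := invmx M.
set Mx := \big[Num.max/0]_(i < m) _.
set D := fun i => derive1 (g i) (enorm (p i - q)).
have hgrad i : \sum_(j < k) G j i ^+ 2 = D i ^+ 2.
  have hr := enorm_pos (hpq i).
  have dg := hgd i _ hr.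
  rewrite (eq_bigr (fun j => (D i * (- (p i - q) 0 j / enorm (p i - q))) ^+ 2));
    last by move=> j _; rewrite /G /gradH !mxE grad_entry // !mxE.
  rewrite (eq_bigr (fun j => (D i / enorm (p i - q)) ^+ 2 * (p i - q) 0 j ^+ 2));
    last by move=> j _; ring.
  rewrite -mulr_sumr.
  have -> : \sum_(j < k) (p i - q) 0 j ^+ 2 = enorm (p i - q) ^+ 2.
    by rewrite /enorm sqr_sqrtr // sumr_ge0 // => j _; exact: sqr_ge0.
  have hr0 : enorm (p i - q) != 0 by rewrite gt_eqF.
  by rewrite expr_div_n; field.
have trM : \tr M = \sum_(i < m) D i ^+ 2.
  rewrite /mxtrace (eq_bigr (fun j => \sum_(i < m) G j i ^+ 2)); last first.
    by move=> j _; rewrite !mxE; apply: eq_bigr => i _; rewrite expr2 !mxE.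
  by rewrite exchange_big; apply: eq_bigr => i _; exact: hgrad.
set j0 : 'I_k := Ordinal hk.
set i0 : 'I_m := Ordinal hm.
have Mx0 : 0 <= Mx.
  apply: le_trans (le_bigmax _ _ i0); exact: sqr_ge0.
have trMle : \tr M <= m%:R * Mx.
  rewrite trM -[Mx]/(Mx) (le_trans (ler_sum _ (fun i _ => le_bigmax 0 (fun i => D i ^+ 2) i))) //.
  by rewrite sumr_const card_ord mulr_natl.
have [n0 m0 nm] := key_ineq j0 hinv.
have diag_ge0 : forall j, 0 <= N j j /\ 0 <= M j j.
  by move=> j; have [a b _] := key_ineq j hinv.
have trN : N j0 j0 <= \tr N.
  rewrite /mxtrace (bigD1 j0) //= lerDl sumr_ge0 // => j _; exact: (diag_ge0 j).1.
have trM0 : M j0 j0 <= \tr M.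
  rewrite /mxtrace (bigD1 j0) //= lerDl sumr_ge0 // => j _; exact: (diag_ge0 j).2.
have prod1 : 1 <= \tr M * \tr N.
  apply: le_trans nm _; rewrite mulrC; apply: ler_pM => //.
have [L0|Lpos] := eqVneq (\tr N) 0.
  by rewrite L0 mulr0 invr0 mulr0.
have Lp : 0 < \tr N by rewrite lt_def Lpos (le_trans n0 trN).
have mp : 0 < m%:R :> R by rewrite ltr0n.
rewrite ler_pdivrMr ?mulr_gt0 //.
apply: le_trans prod1 _; rewrite mulrA (mulrC Mx) ler_pM2r //.
Qed.
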